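(* Let $k$ and $r$ be positive integers with $r \ge 2$, $r \mid k$ and $k \ge 2r$. Let $\chi : \{1, 2, \ldots, rk-2r+1\} \to \{0,1\}$ be a 2-coloring such that $\chi(1) = 0$ and $\chi(r-1) = 1$. Suppose at least one of the following holds: (a) $\chi(r) = 0$; (b) $\chi(k-2) = 1$; (c) $\chi(k-1) = 0$; (d) $\chi(k) = 0$; (e) $\chi(rk-2r-1) = 0$; (f) $\chi(rk-2r+1) = 1$. Then there exists a solution $(\hat{x}_1, \ldots, \hat{x}_k)$ of the equation $x_1 + \cdots + x_{k-1} = x_k$ with all $\hat{x}_i \in \{1, \ldots, rk-2r+1\}$ such that $\sum_{i=1}^k \chi(\hat{x}_i) \equiv 0 \pmod r$.
   Context: Solutions of the equation $x_1 + \cdots + x_{k-1} = x_k$ are taken in positive integers. A solution $(\hat{x}_1,\ldots,\hat{x}_k)$ is called $r$-zero-sum under $\chi$ if $\sum_{i=1}^k \chi(\hat{x}_i) \equiv 0 \pmod r$. *)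

(* Defs.v *)
From mathcomp Require Import all_boot.
Set Implicit Arguments. Unset Strict Implicit. Unset Printing Implicit Defensive.

(* A 2-coloring chi : {1..N} -> {0,1} is modelled as chi : nat -> bool,
   with colour value nat_of_bool (chi n) (false = 0, true = 1); only the
   values on 1..N are ever used. *)

Definition sol_in (k N : nat) (x : nat -> nat) : Prop :=
  (forall i, 1 <= i <= k -> 1 <= x i <= N) /\
  \sum_(1 <= i < k) x i = x k.

Definition zero_sum (r k : nat) (chi : nat -> bool) (x : nat -> nat) : Prop :=
  (\sum_(1 <= i < k.+1) nat_of_bool (chi (x i))) %% r = 0.

(* Main.v *)
Require Import Defs.
From mathcomp Require Import all_boot.
From mathcomp Require Import zify.

Definition mkx (k a b u v T : nat) (i : nat) : nat :=
  if i <= a then u else if i <= a + b then v else if i < k then 1 else T.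

Lemma sum_const_range (m n c : nat) (F : nat -> nat) :
  (forall i, m <= i < n -> F i = c) -> \sum_(m <= i < n) F i = (n - m) * c.
Proof.
move=> H; rewrite (eq_big_nat _ _ H) sum_nat_const_nat //.
Qed.

Lemma mkx_sum (k a b u v T : nat) (F : nat -> nat) :
  a + b < k ->
  \sum_(1 <= i < k) F (mkx k a b u v T i) = a * F u + b * F v + (k - 1 - a - b) * F 1.
Proof.
move=> Hab.
rewrite (@big_cat_nat _ _ _ a.+1) //=; last by lia.
rewrite (@big_cat_nat _ _ _ (a + b).+1 _ k) //=; try lia.
rewrite (@sum_const_range 1 a.+1 (F u)); last first.
  by move=> i Hi; rewrite /mkx; have -> : i <= a by lia.
rewrite (@sum_const_range a.+1 (a+b).+1 (F v)); last first.
  move=> i Hi; rewrite /mkx; have -> : (i <= a) = false by lia.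
  by have -> : i <= a + b by lia.
rewrite (@sum_const_range (a+b).+1 k (F 1)); last first.
  move=> i Hi; rewrite /mkx; have -> : (i <= a) = false by lia.
  have -> : (i <= a + b) = false by lia.
  by have -> : i < k by lia.
have -> : a.+1 - 1 = a by lia.
have -> : (a + b).+1 - a.+1 = b by lia.
have -> : k - (a + b).+1 = k - 1 - a - b by lia.
by rewrite addnA.
Qed.

Lemma mkx_ok (k a b u v N : nat) (chi : nat -> bool) r :
  a + b < k -> 1 <= u <= N -> 1 <= v <= N -> 1 <= N ->
  a * u + b * v + (k - 1 - a - b) <= N ->
  0 < a * u + b * v + (k - 1 - a - b) ->
  (a * chi u + b * chi v + (k - 1 - a - b) * chi 1
     + chi (a * u + b * v + (k - 1 - a - b))) %% r = 0 ->
  exists x : nat -> nat, sol_in k N x /\ zero_sum r k chi x.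
Proof.
move=> Hab Hu Hv HN HT HT0 Hz.
set T := a * u + b * v + (k - 1 - a - b).
exists (mkx k a b u v T); split; last first.
  rewrite /zero_sum big_nat_recr /=; last by lia.
  rewrite (@mkx_sum _ _ _ _ _ _ (fun y => nat_of_bool (chi y))) //.
  rewrite /mkx; have -> : (k <= a) = false by lia.
  have -> : (k <= a + b) = false by lia.
  by rewrite ltnn.
split; last first.
  rewrite (@mkx_sum _ _ _ _ _ _ id) //= muln1 /mkx.
  have -> : (k <= a) = false by lia.
  have -> : (k <= a + b) = false by lia.
  by rewrite ltnn.
move=> i Hi; rewrite /mkx.
case: ifP => _ //; case: ifP => _ //; case: ifP => _; first lia.
by rewrite /T; move: HT HT0; clear; lia.
Qed.

Theorem lemma2 (k r : nat) (chi : nat -> bool) :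
  2 <= r -> r %| k -> 2 * r <= k ->
  chi 1 = false -> chi (r - 1) = true ->
  (chi r = false \/ chi (k - 2) = true \/ chi (k - 1) = false \/
   chi k = false \/ chi (r * k - 2 * r - 1) = false \/
   chi (r * k - 2 * r + 1) = true) ->
  exists x : nat -> nat,
    sol_in k (r * k - 2 * r + 1) x /\ zero_sum r k chi x.
Proof.
move=> Hr _ Hk H1 Hr1 _.
have Hr3 : 3 <= r.
  case: (ltngtP r 2) => // E; first lia.
  by rewrite E /= H1 in Hr1.
have HN : r * r + k <= r * k + 2 by nia.
case Hc: (chi r).
- set T := r * (r - 1) + 0 * 1 + (k - 1 - r - 0).
  case HT: (chi T).
  + apply: (@mkx_ok k (r - 2) 1 r (r - 1)); try lia; try nia.
    have -> : (r - 2) * r + 1 * (r - 1) + (k - 1 - (r - 2) - 1) = T by rewrite /T; nia.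
    rewrite Hc Hr1 H1 HT /=.
    have -> : (r - 2) * 1 + 1 * 1 + (k - 1 - (r - 2) - 1) * 0 + 1 = r by lia.
    by rewrite modnn.
  + apply: (@mkx_ok k r 0 (r - 1) 1); try lia; try nia.
    rewrite -/T Hr1 H1 HT /=.
    have -> : r * 1 + 0 * 0 + (k - 1 - r - 0) * 0 + 0 = r by lia.
    by rewrite modnn.
- set T := (r - 1) * (r - 1) + 0 * 1 + (k - 1 - (r - 1) - 0).
  case HT: (chi T).
  + apply: (@mkx_ok k (r - 1) 0 (r - 1) 1); try lia; try nia.
    rewrite -/T Hr1 H1 HT /=.
    have -> : (r - 1) * 1 + 0 * 0 + (k - 1 - (r - 1) - 0) * 0 + 1 = r by lia.
    by rewrite modnn.
  + apply: (@mkx_ok k (r - 2) 0 r 1); try lia; try nia.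
    have -> : (r - 2) * r + 0 * 1 + (k - 1 - (r - 2) - 0) = T by rewrite /T; nia.
    rewrite Hc H1 HT /=.
    have -> : (r - 2) * 0 + 0 * 0 + (k - 1 - (r - 2) - 0) * 0 + 0 = 0 by lia.
    by rewrite mod0n.
Qed.
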